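(* Let $\{\mathcal{F}_n\}_{n\ge0}$ be a filtration of sub-$\sigma$-fields of $\mathcal{F}$, let $X\in L^\infty$, and let $\{X_n\}_{n\ge0}$ satisfy $X_n\in\mathbb{E}[X\mid\mathcal{F}_n]$ for all $n$. If $X$ lies in the $\|\cdot\|_\infty$-closure of $\bigcup_{n\ge1}L^\infty(\mathcal{F}_n)$, then $\lim_{n\to\infty}\|X_n-X\|_\infty=0$; in particular $X_n\to X$ almost surely.
   Context: $\mathbb{K}$ is a local field with non-archimedean absolute value $|\cdot|$ satisfying $|x|=0 \iff x=0$, $|xy|=|x||y|$, $|x+y|\le|x|\vee|y|$. $(\Omega,\mathcal{F},\mathbb{P})$ is a probability space; all (in)equalities are a.s. $L^\infty$ is the space of $\mathbb{K}$-valued random variables $X$ with $\|X\|_\infty:=\operatorname{ess\,sup}|X|<\infty$ (identified a.s.); $L^\infty(\mathcal{G})$ its $\mathcal{G}$-measurable subspace. For a non-negative real random variable $S$, $\operatorname{ess\,sup}\{S\mid\mathcal{G}\}:=\sup_{p\ge1}\mathbb{E}[S^p\mid\mathcal{G}]^{1/p}$ (usual real conditional expectation), $\|X\|_\mathcal{G}:=\operatorname{ess\,sup}\{|X|\mid\mathcal{G}\}$, and the conditional expectation is the set $\mathbb{E}[X\mid\mathcal{G}]:=\{Y\in L^\infty(\mathcal{G}): \|X-Y\|_\mathcal{G}\le\|X-Z\|_\mathcal{G}\text{ for all }Z\in L^\infty(\mathcal{G})\}$. A filtration is a non-decreasing sequence of sub-$\sigma$-fields. *)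

(* Defs.v *)
From mathcomp Require Import all_boot all_order all_algebra.
From mathcomp Require Import all_classical all_reals all_analysis.
From mathcomp Require Import ess_sup_inf.
Set Implicit Arguments.
Unset Strict Implicit.
Unset Printing Implicit Defensive.
Import Order.TTheory GRing.Theory Num.Def Num.Theory.
Import numFieldNormedType.Exports.
Local Open Scope classical_set_scope.
Local Open Scope ring_scope.

Section LocalField.
Variables (R : realType) (K : fieldType) (absK : K -> R).

(** [absK] is a non-archimedean absolute value and (K, absK) is a
    (non-archimedean) local field: the absolute value is non-trivial,
    K is complete and locally compact (closed unit ball totally bounded). *)
Record is_local_field : Prop := IsLocalField {
  absK_ge0 : forall x, 0 <= absK x;
  absK_eq0 : forall x, absK x = 0 <-> x = 0;
  absKM : forall x y, absK (x * y) = absK x * absK y;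
  absK_ultra : forall x y, absK (x + y) <= Num.max (absK x) (absK y);
  absK_nontrivial : exists x, absK x != 0 /\ absK x != 1;
  absK_complete : forall u : nat -> K,
    (forall e, 0 < e -> exists N, forall m n, (N <= m)%N -> (N <= n)%N ->
        absK (u m - u n) < e) ->
    exists l, forall e, 0 < e -> exists N, forall n, (N <= n)%N -> absK (u n - l) < e;
  absK_loc_compact : forall e, 0 < e -> exists s : seq K,
    forall x, absK x <= 1 -> exists2 y, y \in s & absK (x - y) < e
}.
End LocalField.

Section Probability.
Context {d : measure_display} {T : measurableType d} {R : realType}.
Variables (P : probability T R) (K : fieldType) (absK : K -> R).

Definition sub_sigma_field (G : set (set T)) :=
  sigma_algebra setT G /\ (forall A, G A -> measurable A).

(** G-measurability of a K-valued map: preimages of open balls lie in G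
    (the balls generate the Borel sigma-field of the separable space K). *)
Definition Kmeasurable (G : set (set T)) (X : T -> K) :=
  forall (a : K) (r : R), G (X @^-1` [set x | absK (x - a) < r]).

Definition Rmeasurable (G : set (set T)) (Y : T -> R) :=
  forall a : R, G (Y @^-1` [set y | y < a]).

Definition Linfnorm (X : T -> K) : \bar R :=
  ess_sup P (fun w => (absK (X w))%:E).

Definition Linf (G : set (set T)) (X : T -> K) :=
  Kmeasurable G X /\ (Linfnorm X < +oo)%E.

Definition is_cond_exp (G : set (set T)) (S Y : T -> R) :=
  Rmeasurable G Y /\ P.-integrable setT (fun w => (Y w)%:E) /\
  forall A, G A -> (\int[P]_(w in A) (S w)%:E = \int[P]_(w in A) (Y w)%:E)%E.

(** M is a version of ess sup {S | G} = sup_{p >= 1} E[S^p | G]^(1/p)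
    (p ranging over the integers p >= 1, written p = q.+1). *)
Definition is_cond_esssup (G : set (set T)) (S : T -> R) (M : T -> \bar R) :=
  exists Y : nat -> T -> R,
    (forall q, is_cond_exp G (fun w => S w ^+ q.+1) (Y q)) /\
    {ae P, forall w, M w = ereal_sup [set ((Y q w) `^ (q.+1%:R)^-1)%:E | q in [set: nat]]}.

Definition is_cond_norm (G : set (set T)) (X : T -> K) (M : T -> \bar R) :=
  is_cond_esssup G (fun w => absK (X w)) M.

Definition in_cond_exp (G : set (set T)) (X Y : T -> K) :=
  Linf G Y /\
  forall Z, Linf G Z -> forall M1 M2,
    is_cond_norm G (fun w => X w - Y w) M1 ->
    is_cond_norm G (fun w => X w - Z w) M2 ->
    {ae P, forall w, (M1 w <= M2 w)%E}.

End Probability.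

(* Main.v *)
Require Import Defs.
From HB Require Import structures.
From mathcomp Require Import all_boot all_order all_algebra.
From mathcomp Require Import all_classical all_reals all_analysis.
From mathcomp Require Import ess_sup_inf.
From mathcomp Require Import measurable_realfun.
From mathcomp.algebra_tactics Require Import ring lra.
Import Order.TTheory GRing.Theory Num.Def Num.Theory.
Import numFieldNormedType.Exports.
Local Open Scope classical_set_scope.
Local Open Scope ring_scope.
Set Implicit Arguments.
Unset Strict Implicit.



Section AbsK.
Variables (R : realType) (K : fieldType) (absK : K -> R).
Hypothesis lf : is_local_field absK.

Lemma absK0 : absK 0 = 0.
Proof. by apply/(absK_eq0 lf). Qed.

Lemma absK1 : absK 1 = 1.
Proof.
have h := absKM lf 1 1; rewrite mulr1 in h.
have n0 : absK 1 != 0 by apply/eqP => /(absK_eq0 lf) /eqP; rewrite oner_eq0.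
by apply: (mulfI n0); rewrite -h mulr1.
Qed.

Lemma absKN1 : absK (-1) = 1.
Proof.
have h := absKM lf (-1) (-1); rewrite mulrNN mulr1 absK1 in h.
have g := absK_ge0 lf (-1).
nra.
Qed.

Lemma absKN x : absK (- x) = absK x.
Proof. by rewrite -mulN1r (absKM lf) absKN1 mul1r. Qed.

Lemma absKB x y : absK (x - y) = absK (y - x).
Proof. by rewrite -absKN opprB. Qed.

Lemma absK_ultraB x y z : absK (x - z) <= Num.max (absK (x - y)) (absK (y - z)).
Proof. by have := absK_ultra lf (x - y) (y - z); rewrite addrA subrK. Qed.

End AbsK.



Lemma bernoulli_ge (R : realFieldType) (a : R) (k : nat) : 1 <= a ->
  1 + k%:R * (a - 1) <= a ^+ k.
Proof.
move=> a1; elim: k => [|k IH]; first by rewrite mul0r addr0 expr0.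
rewrite exprS -natr1.
have h0 : 0 <= a - 1 by lra.
have : a * (1 + k%:R * (a - 1)) <= a * a ^+ k by rewrite ler_wpM2l //; lra.
suff : 1 + (k%:R + 1) * (a - 1) <= a * (1 + k%:R * (a - 1)) by lra.
have hk : 0 <= k%:R :> R by [].
have := mulr_ge0 hk (mulr_ge0 h0 h0).
nra.
Qed.

Lemma pow_unbounded (R : realType) (a z : R) : 1 < a -> exists k : nat, z <= a ^+ k.
Proof.
move=> a1.
have h : 0 <= `|z| / (a - 1) by apply: divr_ge0; [exact: normr_ge0| lra].
have := archi_boundP h; set k := archi_bound _ => hk.
exists k.
have hb := @bernoulli_ge _ a k (ltW a1).
have hn := ler_norm z.
have : `|z| / (a - 1) * (a - 1) <= k%:R * (a - 1) by rewrite ler_pM2r; [exact: ltW|lra].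
rewrite divfK; last by rewrite subr_eq0 gt_eqF.
lra.
Qed.

Section Dense.
Variables (R : realType) (K : fieldType) (absK : K -> R).
Hypothesis lf : is_local_field absK.

Lemma absK_gt1 : exists c, 1 < absK c.
Proof.
have [x [x0 x1]] := absK_nontrivial lf.
have hx := absK_ge0 lf x.
have xn0 : x != 0 by apply: contra x0 => /eqP ->; rewrite (absK0 lf).
have [lt1|gt1] := ltP (absK x) 1; last first.
  by exists x; rewrite lt_neqAle eq_sym x1.
exists x^-1.
have h := absKM lf x x^-1; rewrite mulfV // (absK1 lf) in h.
have hxp : 0 < absK x by rewrite lt_neqAle eq_sym x0.
nra.
Qed.

Lemma absKX c k : absK (c ^+ k) = absK c ^+ k.
Proof.
elim: k => [|k IH]; first by rewrite !expr0 (absK1 lf).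
by rewrite !exprS (absKM lf) IH.
Qed.

Lemma dense_seq : exists D : nat -> nat -> nat -> K,
  forall z r, 0 < r -> exists k j i, absK (z - D k j i) < r.
Proof.
have [c c1] := absK_gt1.
have /choice [s hs] : forall j : nat, exists s : seq K,
    forall x, absK x <= 1 -> exists2 y, y \in s & absK (x - y) < (j.+1%:R)^-1.
  by move=> j; apply: (absK_loc_compact lf).
exists (fun k j i => c ^+ k * nth 0 (s j) i) => z r r0.
have [k hk] := pow_unbounded (absK z) c1.
set a := absK c ^+ k in hk.
have ha : 1 <= a by rewrite /a exprn_ege1 // ltW.
have hr : 0 <= a / r by apply: divr_ge0; [lra | exact: ltW].
have := archi_boundP hr; set j := archi_bound _ => hj.
have ck0 : c ^+ k != 0.
  apply/negP => /eqP e; have := absKX c k; rewrite e (absK0 lf) -/a => e'; lra.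
have hinv : absK (c ^+ k)^-1 = a^-1.
  have h := absKM lf (c ^+ k) (c ^+ k)^-1; rewrite mulfV // (absK1 lf) absKX -/a in h.
  have an0 : a != 0 by rewrite gt_eqF //; lra.
  by apply: (mulfI an0); rewrite -h mulfV.
have hz1 : absK ((c ^+ k)^-1 * z) <= 1.
  rewrite (absKM lf) hinv ler_pdivrMl; last lra.
  by rewrite mulr1.
have [y ys hy] := hs j _ hz1.
exists k, j, (index y (s j)); rewrite nth_index //.
have -> : z - c ^+ k * y = c ^+ k * ((c ^+ k)^-1 * z - y).
  by rewrite mulrBr mulrA mulfV // mul1r.
rewrite (absKM lf) absKX -/a.
have hj1 : a / r < j.+1%:R by rewrite (lt_le_trans hj) // ler_nat.
have hjp : 0 < j.+1%:R :> R by [].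
have hyg := absK_ge0 lf ((c ^+ k)^-1 * z - y).
rewrite ltr_pdivrMr // in hj1.
have h1 : a * absK ((c ^+ k)^-1 * z - y) <= a * (j.+1%:R)^-1.
  by rewrite ler_wpM2l //; [lra | exact: ltW].
have h2 : a * (j.+1%:R)^-1 < r by rewrite ltr_pdivrMr // mulrC.
exact: (le_lt_trans h1 h2).
Qed.

End Dense.



Section Meas.
Variables (R : realType) (K : fieldType) (absK : K -> R).
Hypothesis lf : is_local_field absK.
Context (d : measure_display) (T : measurableType d).

Lemma absK_diff_lt_eq (D : nat -> nat -> nat -> K)
  (hD : forall z r, 0 < r -> exists k j i, absK (z - D k j i) < r)
  (X Y : T -> K) (r : R) :
  [set w | absK (X w - Y w) < r] =
  \bigcup_k \bigcup_j \bigcup_i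
    (X @^-1` [set x | absK (x - D k j i) < r] `&`
     Y @^-1` [set x | absK (x - D k j i) < r]).
Proof.
apply/seteqP; split => w /=.
- move=> h.
  have r0 : 0 < r by apply: le_lt_trans h; exact: absK_ge0 lf _.
  have [k [j [i hi]]] := hD (X w) r r0.
  exists k => //; exists j => //; exists i => //; split => //=.
  apply: le_lt_trans (absK_ultraB lf (Y w) (X w) (D k j i)) _.
  by rewrite gt_max hi andbT absKB.
- move=> [k _ [j _ [i _ [/= h1 h2]]]].
  apply: le_lt_trans (absK_ultraB lf (X w) (D k j i) (Y w)) _.
  by rewrite gt_max h1 absKB.
Qed.

Lemma absK_diff_measurable (X Y : T -> K) :
  Kmeasurable absK measurable X -> Kmeasurable absK measurable Y ->
  measurable_fun setT (fun w => absK (X w - Y w)).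
Proof.
move=> mX mY.
have [D hD] := dense_seq lf.
apply: (measurability _ (measurable_realfun.RGenInftyO.measurableE R)) => //.
move=> /= _ [_ [x ->] <-]; apply: measurableI => //.
rewrite (_ : _ @^-1` _ = [set w | absK (X w - Y w) < x]); last first.
  by apply/seteqP; split => w /=; rewrite in_itv.
rewrite (absK_diff_lt_eq hD).
apply: bigcup_measurable => k _; apply: bigcup_measurable => j _.
apply: bigcup_measurable => i _; apply: measurableI; [exact: mX | exact: mY].
Qed.

End Meas.



Section CE.
Context (d : measure_display) (T : measurableType d) (R : realType).
Variable (P : probability T R).
Variable (G : set (set T)).
Hypothesis hG : sub_sigma_field G.

Local Notation TG := (g_sigma_algebraType G).

Lemma measTG (A : set TG) : measurable A = G A.
Proof. by rewrite (measurable_g_measurableTypeE hG.1). Qed.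

Lemma measTG_T (A : set TG) : measurable A -> measurable (A : set T).
Proof. by rewrite measTG => /(hG.2). Qed.

Lemma G_setT : G setT.
Proof. by have [G0 GC _] := hG.1; rewrite -(setD0 setT); apply: GC. Qed.

Definition idTG : T -> TG := id.

Lemma measurable_idTG : measurable_fun setT idTG.
Proof. by move=> _ A mA; rewrite setTI; exact: measTG_T. Qed.

Lemma measurable_TG_T d' (V : measurableType d') (g : TG -> V) :
  measurable_fun setT g -> measurable_fun (setT : set T) (g : T -> V).
Proof. by move=> mg; exact: (measurableT_comp mg measurable_idTG). Qed.

Local Open Scope ereal_scope.

Definition muG : set TG -> \bar R := fun A => P (A : set T).

Let muG0 : muG set0 = 0. Proof. exact: measure0. Qed.
Let muG_ge0 A : 0 <= muG A. Proof. exact: measure_ge0. Qed.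
Let muG_sigma : semi_sigma_additive muG.
Proof.
move=> F mF tF mUF; apply: (@measure_semi_sigma_additive _ _ _ P (F : nat -> set T)).
- by move=> n; exact: measTG_T.
- exact: tF.
- exact: measTG_T.
Qed.

HB.instance Definition _ := isMeasure.Build _ TG R muG muG0 muG_ge0 muG_sigma.

Let muG_fin : fin_num_fun muG.
Proof.
move=> A mA; rewrite ge0_fin_numE //; apply: (le_lt_trans (probability_le1 P _)).
  exact: measTG_T.
exact: ltey.
Qed.

HB.instance Definition _ := Measure_isFinite.Build _ TG R muG muG_fin.

Variable S : T -> R.
Hypothesis S0 : forall w, (0 <= S w)%R.
Hypothesis mS : measurable_fun setT S.
Hypothesis iS : P.-integrable setT (fun w => (S w)%:E).

Definition nuG : set TG -> \bar R := fun A => \int[P]_(w in (A : set T)) (S w)%:E.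

Let mSE : measurable_fun setT (EFin \o S).
Proof. exact/measurable_EFinP. Qed.

Let nuG0 : nuG set0 = 0. Proof. exact: integral_set0. Qed.
Let nuG_ge0 A : 0 <= nuG A.
Proof. by apply: integral_ge0 => w _; rewrite lee_fin. Qed.
Let nuG_sigma : semi_sigma_additive nuG.
Proof.
move=> F mF tF mUF.
apply: (@semi_sigma_additive_nng_induced _ _ _ P (fun w => (S w)%:E) mSE _ (F : nat -> set T)).
- by move=> w; rewrite lee_fin.
- by move=> n; exact: measTG_T.
- exact: tF.
- exact: measTG_T.
Qed.

HB.instance Definition _ := isMeasure.Build _ TG R nuG nuG0 nuG_ge0 nuG_sigma.

Let nuG_fin : fin_num_fun nuG.
Proof.
move=> A mA; rewrite ge0_fin_numE //.
have mA' := measTG_T mA.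
apply: (@le_lt_trans _ _ (\int[P]_(w in setT) (S w)%:E)).
  apply: ge0_subset_integral => //= w _; by rewrite lee_fin.
by have [_] := integrableP _ _ _ iS; under eq_integral do rewrite gee0_abs ?lee_fin//.
Qed.

HB.instance Definition _ := Measure_isFinite.Build _ TG R nuG nuG_fin.

Lemma nuG_dom : nuG `<< muG.
Proof.
apply/null_content_dominatesP => A mA muA.
apply: null_set_integral => //.
- exact: measTG_T.
- exact: measurable_funTS.
Qed.

Lemma ae_TG_T (Q : T -> Prop) :
  (\forall x \ae muG, Q x) -> (\forall x \ae P, Q x).
Proof.
move=> [N [mN N0 sub]]; exists (N : set T); split => //.
exact: measTG_T.
Qed.

Lemma ce_exists : exists Y : T -> R,
  [/\ is_cond_exp P G S Y, (forall w, (0 <= Y w)%R) &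
      measurable_fun (setT : set TG) Y].
Proof.
have [f [f0 intf fE]] := radon_nikodym_finite nuG_dom.
have mf : measurable_fun (setT : set TG) f := measurable_int _ intf.
pose Y := fun w => fine (f w).
have mY : measurable_fun (setT : set TG) Y.
  exact: (measurableT_comp (@fine_measurable R setT measurableT) mf).
have Y0 : forall w, (0 <= Y w)%R by move=> w; apply: fine_ge0.
have hfin := ae_TG_T (integrable_ae measurableT intf).
have hfY : ae_eq P setT f (fun w => (Y w)%:E).
  by apply: (@filterS _ _ (ae_filter_ringOfSetsType P) _ _ _ hfin) => w h /h wf; rewrite /Y fineK.
have mfT : measurable_fun (setT : set T) f := measurable_TG_T mf.
have mYT : measurable_fun (setT : set T) Y := measurable_TG_T mY.
have mYET : measurable_fun (setT : set T) (EFin \o Y) by exact/measurable_EFinP.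
have key : forall A, G A ->
    \int[P]_(w in A) (S w)%:E = \int[P]_(w in A) (Y w)%:E.
  move=> A GA.
  have mA : measurable (A : set TG) by rewrite measTG.
  have mAT : measurable (A : set T) := measTG_T mA.
  rewrite -/(nuG A) (fE A mA).
  have := @ge0_integral_pushforward _ _ T TG R idTG measurable_idTG P A f mA
    (measurable_funTS mf) (fun y _ => f0 y).
  rewrite /=.
  move=> ->.
  apply: ae_eq_integral => //.
  - exact: measurable_funTS.
  - exact: measurable_funTS.
  - by apply: filterS hfY => w h _; exact: h.
exists Y; split => //; split; last split.
- move=> a.
  rewrite -measTG.
  have := mY measurableT `]-oo, a[%classic (measurable_itv _).
  rewrite setTI.
  congr measurable; apply/seteqP; split => w /=; by rewrite in_itv.
- apply/integrableP; split => //.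
  under eq_integral do rewrite gee0_abs ?lee_fin//.
  rewrite -key; last exact: G_setT.
  have := iS; move=> /integrableP [_].
  by under eq_integral do rewrite gee0_abs ?lee_fin//.
- exact: key.
Qed.

End CE.



Lemma le_inv (R : realType) (x y : R) :
  (forall n : nat, x <= y + n.+1%:R^-1) -> x <= y.
Proof.
move=> h; apply/ler_addgt0Pr => e e0.
have h1 : 0 <= e^-1 by rewrite invr_ge0 ltW.
have := archi_boundP h1; set n := archi_bound _ => hn.
apply: (le_trans (h n)); rewrite lerD2l.
have hn1 : e^-1 < n.+1%:R by rewrite (lt_le_trans hn) // ler_nat.
rewrite -(invrK e) lef_pV2 ?posrE ?invr_gt0 //; exact: ltW.
Qed.

Section AE.
Context (d : measure_display) (T : measurableType d) (R : realType).
Variable (P : probability T R).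

Lemma aeS (Q1 Q2 : T -> Prop) : (forall w, Q1 w -> Q2 w) ->
  (\forall w \ae P, Q1 w) -> (\forall w \ae P, Q2 w).
Proof. by move=> h; apply: (@filterS _ _ (ae_filter_ringOfSetsType P)). Qed.

Lemma aeI (Q1 Q2 : T -> Prop) :
  (\forall w \ae P, Q1 w) -> (\forall w \ae P, Q2 w) ->
  (\forall w \ae P, Q1 w /\ Q2 w).
Proof.
move=> h1 h2; have F := ae_filter_ringOfSetsType P.
by apply: filterI.
Qed.

Lemma null_ae (A : set T) : measurable A -> P A = 0%E ->
  \forall w \ae P, ~ A w.
Proof. by move=> mA PA; exists A; split => // w /= /contrapT. Qed.

Lemma ae_nonempty (Q : T -> Prop) : (\forall w \ae P, Q w) -> exists w, Q w.
Proof.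
move=> [N [mN N0 sub]]; apply: contrapT => hn.
have : (~` (fun w => Q w)) = setT.
  by apply/seteqP; split => // w _ /= qw; apply: hn; exists w.
move=> e; rewrite e in sub.
have : (P setT <= P N)%E by apply: le_measure => //; rewrite inE.
by rewrite probability_setT N0 lee_fin ler10.
Qed.

Local Open Scope ereal_scope.

Lemma ce_le (G : set (set T)) (hG : sub_sigma_field G) (S Y : T -> R) (b : R) :
  (0 <= b)%R -> is_cond_exp P G S Y -> measurable_fun setT S ->
  (forall w, (0 <= S w)%R) ->
  (forall c, G [set w | (c < Y w)%R]) ->
  measurable_fun setT Y ->
  (\forall w \ae P, (S w <= b)%R) -> (\forall w \ae P, (Y w <= b)%R).
Proof.
move=> b0 [_ [iY hY]] mS S0 GY mY hSb.
have step : forall n : nat,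
    \forall w \ae P, (Y w <= b + n.+1%:R^-1)%R.
  move=> n; set e := (n.+1%:R^-1)%R.
  have e0 : (0 < e)%R by rewrite invr_gt0.
  set A := [set w | (b + e < Y w)%R].
  have mA : measurable A by apply: hG.2; exact: GY.
  have PA : P A = 0.
    have h1 : \int[P]_(w in A) (S w)%:E <= \int[P]_(w in A) (cst b%:E) w.
      apply: ae_ge0_le_integral => //.
      - by move=> w _; rewrite lee_fin.
      - by apply/measurable_EFinP; exact: measurable_funTS.
      - by apply: aeS hSb => w h _; rewrite lee_fin.
    have h2 : \int[P]_(w in A) (cst (b + e)%R%:E) w <= \int[P]_(w in A) (Y w)%:E.
      apply: ge0_le_integral => //.
      - by move=> w _; rewrite lee_fin; lra.
      - by apply/measurable_EFinP; exact: measurable_funTS.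
      - by move=> w Aw; rewrite lee_fin; exact: ltW.
    rewrite -hY in h2; last exact: GY.
    have := le_trans h2 h1; rewrite !integral_cst //.
    have PAf : P A \is a fin_num by rewrite fin_num_measure.
    move=> h.
    have h' : ((b + e) * fine (P A) <= b * fine (P A))%R.
      by rewrite -lee_fin !EFinM fineK.
    have PA0 : (0 <= fine (P A))%R by rewrite fine_ge0.
    rewrite -(fineK PAf); congr EFin.
    nra.
  by apply: aeS (null_ae mA PA) => w /= /negP; rewrite -leNgt.
by apply: aeS (ae_foralln step) => w h; apply: le_inv.
Qed.

End AE.



Section Norms.
Variables (R : realType) (K : fieldType) (absK : K -> R).
Hypothesis lf : is_local_field absK.
Context (d : measure_display) (T : measurableType d).
Variable (P : probability T R).

Local Open Scope ereal_scope.

Lemma Linf_ae (f : T -> K) :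
  \forall w \ae P, (absK (f w))%:E <= Linfnorm P absK f.
Proof. exact: ess_sup_ge. Qed.

Lemma Linfnorm_le (f : T -> K) (y : \bar R) :
  (\forall w \ae P, (absK (f w))%:E <= y) -> Linfnorm P absK f <= y.
Proof. by move=> h; apply/ess_supP. Qed.

Lemma Linfnorm_ge0 (f : T -> K) : 0 <= Linfnorm P absK f.
Proof.
apply: (@ess_sup_gee _ _ _ P).
  by rewrite (_ : _ [set: T] = 1) ?lte01 //; exact: probability_setT.
by apply: nearW => w; rewrite lee_fin (absK_ge0 lf).
Qed.

Lemma Linfnorm_sym (X Y : T -> K) :
  Linfnorm P absK (fun w => (X w - Y w)%R) = Linfnorm P absK (fun w => (Y w - X w)%R).
Proof.
by rewrite /Linfnorm; congr ess_sup; apply/funext => w; rewrite (absKB lf).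
Qed.

Lemma Linf_diff_fin (G1 G2 : set (set T)) (X Y : T -> K) :
  Linf P absK G1 X -> Linf P absK G2 Y ->
  Linfnorm P absK (fun w => (X w - Y w)%R) < +oo.
Proof.
move=> [_ hX] [_ hY].
apply: (le_lt_trans (y := maxe (Linfnorm P absK X) (Linfnorm P absK Y))); last first.
  by rewrite gt_max hX hY.
apply: Linfnorm_le; apply: aeS (aeI (Linf_ae X) (Linf_ae Y)) => w [h1 h2].
apply: le_trans (_ : (Num.max (absK (X w)) (absK (- Y w)%R))%:E <= _).
  by rewrite lee_fin (absK_ultra lf).
rewrite (absKN lf) EFin_max ge_max !le_max h1 h2 /= orbT.
by [].
Qed.

Lemma ae_all (Q : T -> Prop) : (forall w, Q w) -> \forall w \ae P, Q w.
Proof. by move=> h; exists set0; split => // w /= /(_ (h w)). Qed.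

Lemma S_meas (X Y : T -> K) n :
  Kmeasurable absK measurable X -> Kmeasurable absK measurable Y ->
  measurable_fun setT (fun w => (absK (X w - Y w) ^+ n)%R).
Proof. by move=> mX mY; apply: measurable_funX; exact: absK_diff_measurable. Qed.

Lemma Linfnorm_fin (f : T -> K) : Linfnorm P absK f < +oo ->
  Linfnorm P absK f = (fine (Linfnorm P absK f))%:E.
Proof.
move=> h; rewrite fineK // ge0_fin_numE //; exact: Linfnorm_ge0.
Qed.

Lemma S_int (X Y : T -> K) n :
  Kmeasurable absK measurable X -> Kmeasurable absK measurable Y ->
  Linfnorm P absK (fun w => (X w - Y w)%R) < +oo ->
  P.-integrable setT (fun w => (absK (X w - Y w) ^+ n)%:E).
Proof.
move=> mX mY hf.
set c := fine (Linfnorm P absK (fun w => (X w - Y w)%R)).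
have hc := Linfnorm_fin hf; rewrite -/c in hc.
have c0 : (0 <= c)%R by rewrite /c fine_ge0 // Linfnorm_ge0.
have hae := Linf_ae (fun w => (X w - Y w)%R); rewrite hc in hae.
have mS := S_meas n mX mY.
apply/integrableP; split; first exact/measurable_EFinP.
apply: (@le_lt_trans _ _ (\int[P]_(w in setT) (cst (c ^+ n)%R%:E) w)).
  apply: ae_ge0_le_integral => //.
  - by apply: measurableT_comp => //; exact/measurable_EFinP.
  - by move=> w _; rewrite lee_fin exprn_ge0.
  - apply: aeS hae => w h _ /=.
    rewrite ?lee_fin ger0_norm ?exprn_ge0 ?(absK_ge0 lf) //.
    by rewrite lerXn2r // ?nnegrE ?(absK_ge0 lf) // -lee_fin.
rewrite integral_cst // (_ : _ [set: T] = 1); last exact: probability_setT.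
by rewrite mule1 ltry.
Qed.

Lemma cond_norm_exists (G : set (set T)) (hG : sub_sigma_field G) (X Y : T -> K) :
  Kmeasurable absK measurable X -> Kmeasurable absK measurable Y ->
  Linfnorm P absK (fun w => (X w - Y w)%R) < +oo ->
  exists Ys : nat -> T -> R,
  [/\ forall q, is_cond_exp P G (fun w => (absK (X w - Y w) ^+ q.+1)%R) (Ys q),
      forall q w, (0 <= Ys q w)%R,
      forall q c, G [set w | (c < Ys q w)%R],
      forall q, measurable_fun setT (Ys q) &
      is_cond_norm P absK G (fun w => (X w - Y w)%R)
        (fun w => ereal_sup [set ((Ys q w) `^ (q.+1%:R)^-1)%:E | q in [set: nat]])].
Proof.
move=> mX mY hf.
have /choice [Ys hYs] : forall q : nat, exists Yq : T -> R,
    [/\ is_cond_exp P G (fun w => (absK (X w - Y w) ^+ q.+1)%R) Yq,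
        (forall w, (0 <= Yq w)%R) &
        measurable_fun (setT : set (g_sigma_algebraType G)) Yq].
  move=> q; apply: ce_exists => //.
  - by move=> w; rewrite exprn_ge0 // (absK_ge0 lf).
  - exact: S_meas.
  - exact: S_int.
exists Ys; split.
- by move=> q; have [] := hYs q.
- by move=> q; have [] := hYs q.
- move=> q c; have [_ _ mYq] := hYs q.
  rewrite -(measTG hG).
  have := mYq measurableT `]c, +oo[%classic (measurable_itv _).
  rewrite setTI; congr measurable; apply/seteqP; split => w /=; by rewrite in_itv /= andbT.
- by move=> q; have [_ _ mYq] := hYs q; exact: (measurable_TG_T hG).
- exists Ys; split; first by move=> q; have [] := hYs q.
  exact: ae_all.
Qed.

End Norms.



Lemma geom0 (R : realType) (b e p : R) : 0 <= b -> 0 < e -> 0 <= p -> p <= 1 ->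
  (forall n, p * (b + e) ^+ n.+1 <= b ^+ n.+1) -> p = 0.
Proof.
move=> b0 e0 p0 p1 h.
set r := b / (b + e).
have be0 : 0 < b + e by lra.
have r0 : 0 <= r by rewrite divr_ge0 //; lra.
have r1 : r < 1 by rewrite ltr_pdivrMr // mul1r; lra.
have hp : forall n, p <= r ^+ n.
  case => [|n]; first by rewrite expr0.
  rewrite /r expr_div_n ler_pdivlMr ?exprn_gt0 //.
have cv : (fun n => r ^+ n) @ \oo --> 0.
  by apply: cvg_expr; rewrite ger0_norm.
have : p <= lim ((fun n => r ^+ n) @ \oo).
  apply: limr_ge; first by apply/cvg_ex; exists 0.
  by apply: nearW => n; exact: hp.
rewrite (cvg_lim _ cv) //; lra.
Qed.

Section MainIneq.
Variables (R : realType) (K : fieldType) (absK : K -> R).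
Hypothesis lf : is_local_field absK.
Context (d : measure_display) (T : measurableType d).
Variable (P : probability T R).

Lemma Kmeas_sub (G1 G2 : set (set T)) (X : T -> K) :
  (forall A, G1 A -> G2 A) -> Kmeasurable absK G1 X -> Kmeasurable absK G2 X.
Proof. by move=> h mX a r; apply: h; exact: mX. Qed.

Lemma powR_inv_le (y b : R) (q : nat) : 0 <= y -> 0 <= b ->
  y <= b ^+ q.+1 -> y `^ (q.+1%:R)^-1 <= b.
Proof.
move=> y0 b0 h.
have hb : (b ^+ q.+1) `^ (q.+1%:R)^-1 = b.
  by rewrite -powR_mulrn // -powRrM mulfV // powRr1.
rewrite -[X in _ <= X]hb.
apply: ge0_ler_powR => //; rewrite ?nnegrE ?invr_ge0 //; exact: exprn_ge0.
Qed.

Lemma powR_inv_ge (y b : R) (q : nat) : 0 <= y -> 0 <= b ->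
  y `^ (q.+1%:R)^-1 <= b -> y <= b ^+ q.+1.
Proof.
move=> y0 b0 h.
have hy : (y `^ (q.+1%:R)^-1) ^+ q.+1 = y.
  by rewrite -powR_mulrn ?powR_ge0 // -powRrM mulVf // powRr1.
rewrite -[X in X <= _]hy lerXn2r // ?nnegrE ?powR_ge0 //.
Qed.

Local Open Scope ereal_scope.

Lemma main_ineq (G : set (set T)) (hG : sub_sigma_field G) (X Y Z : T -> K) :
  Linf P absK measurable X -> in_cond_exp P absK G X Y -> Linf P absK G Z ->
  Linfnorm P absK (fun w => (X w - Y w)%R) <= Linfnorm P absK (fun w => (X w - Z w)%R).
Proof.
move=> hX [hY hmin] hZ.
have mX := hX.1.
have mY := Kmeas_sub hG.2 hY.1.
have mZ := Kmeas_sub hG.2 hZ.1.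
have hXY := Linf_diff_fin lf hX hY.
have hXZ := Linf_diff_fin lf hX hZ.
set b := fine (Linfnorm P absK (fun w => (X w - Z w)%R)).
have hb := Linfnorm_fin lf hXZ; rewrite -/b in hb.
have b0 : (0 <= b)%R by rewrite /b fine_ge0 // (Linfnorm_ge0 lf).
have [Y1 [ce1 Y10 GY1 mY1 cn1]] := cond_norm_exists lf hG mX mY hXY.
have [Y2 [ce2 Y20 GY2 mY2 cn2]] := cond_norm_exists lf hG mX mZ hXZ.
have hle := hmin Z hZ _ _ cn1 cn2.
have aeZ : \forall w \ae P, (absK (X w - Z w))%:E <= b%:E.
  by rewrite -hb; exact: (@Linf_ae _ _ _ _ _ P (fun w => (X w - Z w)%R)).
have aeY2 : \forall w \ae P, forall q, (Y2 q w <= b ^+ q.+1)%R.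
  apply: ae_foralln => q.
  apply: (ce_le hG (exprn_ge0 _ b0) (ce2 q)) => //.
  - exact: S_meas.
  - by move=> w; rewrite exprn_ge0 // (absK_ge0 lf).
  - apply: aeS aeZ => w h; rewrite lerXn2r // ?nnegrE ?(absK_ge0 lf) //.
have aeM2 : \forall w \ae P,
    ereal_sup [set ((Y2 q w) `^ (q.+1%:R)^-1)%:E | q in [set: nat]] <= b%:E.
  apply: aeS aeY2 => w h; apply: ge_ereal_sup => _ [q _ <-].
  by rewrite lee_fin; apply: powR_inv_le.
have aeY1 : \forall w \ae P, forall q, (Y1 q w <= b ^+ q.+1)%R.
  apply: aeS (aeI hle aeM2) => w [h1 h2] q.
  apply: powR_inv_ge => //.
  rewrite -lee_fin; apply: le_trans h2; apply: le_trans h1.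
  by apply: ereal_sup_ubound; exists q.
have intS1 : forall q,
    \int[P]_(w in setT) ((absK (X w - Y w)) ^+ q.+1)%:E <= (b ^+ q.+1)%:E.
  move=> q; have [_ [iY1 hY1]] := ce1 q.
  rewrite hY1; last exact: G_setT.
  apply: (@le_trans _ _ (\int[P]_(w in setT) (cst (b ^+ q.+1)%:E) w)).
    apply: ae_ge0_le_integral => //.
    - by move=> w _; rewrite lee_fin.
    - by apply/measurable_EFinP; exact: mY1.
    - by move=> w _; rewrite lee_fin exprn_ge0.
    - by apply: aeS aeY1 => w h _; rewrite lee_fin.
  rewrite integral_cst // (_ : _ [set: T] = 1); last exact: probability_setT.
  by rewrite mule1.
have mS1 : measurable_fun setT (fun w => absK (X w - Y w)).
  exact: absK_diff_measurable.
have step : forall n : nat,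
    \forall w \ae P, (absK (X w - Y w) <= b + n.+1%:R^-1)%R.
  move=> n; set e := (n.+1%:R^-1)%R.
  have e0 : (0 < e)%R by rewrite invr_gt0.
  set A := [set w | (b + e < absK (X w - Y w))%R].
  have mA : measurable A.
    have := mS1 measurableT `](b + e)%R, +oo[%classic (measurable_itv _).
    rewrite setTI; congr measurable; apply/seteqP; split => w /=; by rewrite in_itv /= andbT.
  have PAf : P A \is a fin_num by rewrite fin_num_measure.
  have PA : P A = 0.
    have PA0 : (0 <= fine (P A))%R by rewrite fine_ge0.
    have PA1 : (fine (P A) <= 1)%R.
      by rewrite -lee_fin fineK //; apply: probability_le1.
    rewrite -(fineK PAf); congr EFin.
    apply: (geom0 b0 e0 PA0 PA1) => q.
    rewrite -lee_fin EFinM fineK // muleC.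
    apply: le_trans (intS1 q).
    apply: (@le_trans _ _ (\int[P]_(w in A) ((absK (X w - Y w)) ^+ q.+1)%:E)).
      rewrite -integral_cst //.
      apply: ge0_le_integral => //.
      - by move=> w _; rewrite lee_fin exprn_ge0 //; lra.
      - by apply/measurable_EFinP; apply: measurable_funX; exact: measurable_funTS.
      - move=> w Aw; rewrite lee_fin lerXn2r // ?nnegrE ?(absK_ge0 lf) //; last exact: ltW.
        lra.
    apply: ge0_subset_integral => //.
    - by apply/measurable_EFinP; apply: measurable_funX.
    - by move=> w _; rewrite lee_fin exprn_ge0 // (absK_ge0 lf).
  by apply: aeS (null_ae mA PA) => w /= /negP; rewrite -leNgt.
rewrite hb; apply: Linfnorm_le.
by apply: aeS (ae_foralln step) => w h; rewrite lee_fin; apply: le_inv.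
Qed.

End MainIneq.



Lemma ecvg0 (R : realType) (u : nat -> \bar R) : (forall n, (0 <= u n)%E) ->
  (forall e : R, 0 < e -> exists N, forall n, (N <= n)%N -> (u n < e%:E)%E) ->
  u n @[n --> \oo] --> 0%E.
Proof.
move=> u0 h; apply/fine_cvgP; split.
  have [N hN] := h 1 ltr01.
  exists N => // n /= hn; rewrite ge0_fin_numE //; apply: lt_trans (hN n hn) _.
  exact: ltry.
apply/cvgr0Pnorm_lt => e e0.
have [N hN] := h e e0.
exists N => // n /= hn.
have hf : u n \is a fin_num.
  by rewrite ge0_fin_numE //; apply: lt_trans (hN n hn) _; exact: ltry.
rewrite ger0_norm; last exact: fine_ge0.
by rewrite -lte_fin fineK //; exact: hN.
Qed.

Unset Implicit Arguments.
Set Strict Implicit.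

Theorem mainTheorem19 (R : realType) (K : fieldType) (absK : K -> R)
  (d : measure_display) (T : measurableType d) (P : probability T R)
  (F : nat -> set (set T)) (X : T -> K) (Xn : nat -> T -> K) :
  is_local_field absK ->
  (forall n, sub_sigma_field (F n)) ->
  (forall n A, F n A -> F n.+1 A) ->
  Linf P absK measurable X ->
  (forall n, in_cond_exp P absK (F n) X (Xn n)) ->
  (forall e : R, 0 < e -> exists n, (1 <= n)%N /\
     exists Z, Linf P absK (F n) Z /\ (Linfnorm P absK (fun w => (X w - Z w)%R) < e%:E)%E) ->
  (Linfnorm P absK (fun w => Xn n w - X w)) @[n --> \oo] --> 0%E /\
  {ae P, forall w, (fun n => absK (Xn n w - X w)) @ \oo --> 0}.
Proof.
move=> lf hF hmono hX hXn happ.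
have Fmono : forall n m A, (n <= m)%N -> F n A -> F m A.
  move=> n m A /subnK <-; elim: (m - n)%N => [|k IH] //= hA.
  by rewrite addSn; apply: hmono; exact: IH.
have key : forall e : R, 0 < e -> exists N, forall n, (N <= n)%N ->
    (Linfnorm P absK (fun w => (Xn n w - X w)%R) < e%:E)%E.
  move=> e e0; have [N [_ [Z [[mZ nZ] hZ]]]] := happ e e0.
  exists N => n hn.
  rewrite (Linfnorm_sym lf).
  apply: le_lt_trans hZ.
  apply: (main_ineq lf (hF n) hX (hXn n)).
  split => //; exact: (Kmeas_sub (fun A => Fmono N n A hn) mZ).
split.
  apply: ecvg0 => // n; exact: (Linfnorm_ge0 lf).
have hae : \forall w \ae P, forall n,
    ((absK (Xn n w - X w))%:E <= Linfnorm P absK (fun w => (Xn n w - X w)%R))%E.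
  by apply: ae_foralln => n; exact: (@Linf_ae _ _ _ _ _ P (fun w => Xn n w - X w)).
apply: aeS hae => w hw.
apply/cvgr0Pnorm_lt => e e0.
have [N hN] := key e e0.
exists N => // n /= hn.
rewrite ger0_norm; last exact: (absK_ge0 lf).
by rewrite -lte_fin; apply: le_lt_trans (hw n) (hN n hn).
Qed.
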